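(* In the Bayesian offline learning setting for $n$-round dynamic inference described in the context, fix $i\in\{1,\ldots,n\}$ and any initial distribution $P_{X_i}$ of the round-$i$ observation. Then $$\min_{\psi_{m,i},\ldots,\psi_{m,n}}\mathbb E\Big[\sum_{j=i}^n\ell(X_j,Y_j,\hat Y_j)\Big]=\mathbb E\big[V^*_{m,i}(\pi_m,X_i)\big],$$ and the minimum is achieved by the estimators $(\psi^*_{m,i},\ldots,\psi^*_{m,n})$.
   Context: Setting (Bayesian offline learning for $n$-round dynamic inference). $\mathsf X,\mathsf Y,\hat{\mathsf Y},\mathsf W$ are measurable spaces and $\Delta$ is the space of probability distributions on $\mathsf W$. The following are given: probability transition kernels $K_j(\cdot\mid x,\hat y)$ from $\mathsf X\times\hat{\mathsf Y}$ to $\mathsf X$; a parametrized family of kernels $\{P_{Y|X,w}:w\in\mathsf W\}$ from $\mathsf X$ to $\mathsf Y$; a prior $P_W$ on $\mathsf W$; a conditional distribution $P_{Z^m|W}$ of an $m$-sample training dataset $Z^m$ with values in $(\mathsf X\times\hat{\mathsf Y})^m$; and a loss $\ell:\mathsf X\times\mathsf Y\times\hat{\mathsf Y}\to\mathbb R$. The estimators $\psi_{m,j}$ map $(Z^m,X^j,\hat Y^{j-1})$ (or, for the rounds considered, the available past from round $i$ on together with $Z^m$) to $\hat{\mathsf Y}$. The process is as follows. $W\sim P_W$, and $Z^m\mid W\sim P_{Z^m|W}$. $X_i\sim P_{X_i}$ is independent of $(W,Z^m)$. For $j\ge i$: given all previously generated variables, $Y_j\sim P_{Y|X,W}(\cdot\mid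 X_j,W)$; $\hat Y_j=\psi_{m,j}(\cdots)$; and $X_{j+1}\sim K_{j+1}(\cdot\mid X_j,\hat Y_j)$. Let $\pi_m(\cdot)=\mathbb P[W\in\cdot\mid Z^m]$ and $\tilde\ell(\pi,x,\hat y)=\int_{\mathsf W}\int_{\mathsf Y}\pi(\mathrm dw)P_{Y|X,W}(\mathrm dy\mid x,w)\ell(x,y,\hat y)$. Define $Q^*_{m,n}=\tilde\ell$, $V^*_{m,j}(\pi,x)=\min_{\hat y}Q^*_{m,j}(\pi,x,\hat y)$ for $j=n,\ldots,1$, and $Q^*_{m,j}(\pi,x,\hat y)=\tilde\ell(\pi,x,\hat y)+\int K_{j+1}(\mathrm dx'\mid x,\hat y)V^*_{m,j+1}(\pi,x')$ for $j=n-1,\ldots,1$. Set $\psi^*_{m,j}(\pi,x)=\arg\min_{\hat y}Q^*_{m,j}(\pi,x,\hat y)$, used as $\hat Y_j=\psi^*_{m,j}(\pi_m,X_j)$. *)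

(* Defs.v *)
From HB Require Import structures.
From mathcomp Require Import all_boot all_order all_algebra.
From mathcomp Require Import all_classical all_reals all_analysis.

Set Implicit Arguments.
Unset Strict Implicit.
Unset Printing Implicit Defensive.

Import Order.TTheory GRing.Theory Num.Theory.
Local Open Scope classical_set_scope.
Local Open Scope ereal_scope.

(* Spaces: X (observations), Y (labels), Yh (estimates), W (parameter),
   Zm (space of the m-sample training data set Z^m).
   Kernels:  K j : (x, yh) |-> K_j(. | x, yh)           (X * Yh ~> X)
             PY  : (x, w)  |-> P_{Y|X,W}(. | x, w)       (X * W ~> Y)
             PZW : w       |-> P_{Z^m|W}(. | w)           (W ~> Zm)
   Posterior: post : z |-> pi_m = P[W in . | Z^m = z]     (Zm ~> W)       *)

Section dynamic_inference.
Context {R : realType} {dX dY dYh dW dZ : measure_display}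
  (X : measurableType dX) (Y : measurableType dY) (Yh : measurableType dYh)
  (W : measurableType dW) (Zm : measurableType dZ).

(* A probability kernel [post] is a version of the posterior (regular
   conditional distribution of W given Z^m) when, for all measurable A, B,
     P[W in A, Z^m in B] = E[ 1_B(Z^m) * post(Z^m)(A) ].                   *)
Definition is_posterior (PW : probability W R) (PZW : R.-pker W ~> Zm)
    (post : R.-pker Zm ~> W) : Prop :=
  forall (A : set W) (B : set Zm), measurable A -> measurable B ->
    \int[PW]_(w in A) PZW w B =
    \int[PW]_w \int[PZW w]_(z in B) post z A.

(* Information available at round i + k: (Z^m, X_i, Yh_i, X_{i+1}, ...,
   Yh_{i+k-1}, X_{i+k}), encoded as the nested pair
   ((...(((z, x_i), yh_i), x_{i+1}) ...), yh_{i+k-1}), x_{i+k}). *)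
Fixpoint Hist (k : nat) : {d : measure_display & measurableType d} :=
  match k with
  | 0 => existT _ _ ((Zm * X)%type : measurableType _)
  | k'.+1 => existT _ _ (((projT2 (Hist k') * Yh) * X)%type : measurableType _)
  end.

Definition hist_x (k : nat) : projT2 (Hist k) -> X :=
  match k with 0 => snd | _.+1 => snd end.

Fixpoint hist_z (k : nat) : projT2 (Hist k) -> Zm :=
  match k with
  | 0 => fst
  | k'.+1 => fun h => hist_z h.1.1
  end.

(* A sequence of estimators: psi k is the estimator psi_{m,i+k} used at round
   i + k, a function of the available information. *)
Definition policy := forall k : nat, projT2 (Hist k) -> Yh.

(* psi_{m,i}, ..., psi_{m,n} are (measurable) estimators; N = n - i *)
Definition admissible (N : nat) (psi : policy) : Prop :=
  forall k, (k <= N)%N -> measurable_fun [set: projT2 (Hist k)] (psi k).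

Variables (K : nat -> R.-pker (X * Yh)%type ~> X)
          (PY : R.-pker (X * W)%type ~> Y)
          (ell : X -> Y -> Yh -> R).

(* Cost-to-go of the process under the policy psi, for a fixed value w of W,
   from round j = i + k with r = n - j rounds remaining, given the history h:
     E[ sum_{t=j}^{n} ell(X_t, Y_t, Yh_t) | W = w, history h ],
   where Y_j ~ P_{Y|X,W}(.|X_j, w), Yh_j = psi_j(h), X_{j+1} ~ K_{j+1}(.|X_j, Yh_j). *)
Fixpoint cost_to_go (i : nat) (psi : policy) (r k : nat) (w : W)
    : projT2 (Hist k) -> \bar R :=
  fun h =>
  match r with
  | 0 => \int[PY (hist_x h, w)]_y (ell (hist_x h) y (psi k h))%:E
  | r'.+1 =>
      \int[PY (hist_x h, w)]_y
        ((ell (hist_x h) y (psi k h))%:E +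
         \int[K (i + k).+1 (hist_x h, psi k h)]_x'
            cost_to_go i psi r' w (((h, psi k h), x') : projT2 (Hist k.+1)))
  end.

(* E[ sum_{j=i}^{n} ell(X_j, Y_j, Yh_j) ] for W ~ PW, Z^m | W ~ PZW,
   X_i ~ PXi independent of (W, Z^m). *)
Definition expected_loss (PW : probability W R) (PZW : R.-pker W ~> Zm)
    (PXi : probability X R) (i n : nat) (psi : policy) : \bar R :=
  \int[PW]_w \int[PZW w]_z \int[PXi]_x
     @cost_to_go i psi (n - i)%N 0%N w ((z, x) : projT2 (Hist 0)).

Definition ltilde (pi : measure W R) (x : X) (yh : Yh) : \bar R :=
  \int[pi]_w \int[PY (x, w)]_y (ell x y yh)%:E.

(* Qaux n r = Q*_{m, n - r}  (backward recursion, r = 0 is the last round) *)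
Fixpoint Qaux (n r : nat) (pi : measure W R) (x : X) (yh : Yh)
    : \bar R :=
  match r with
  | 0 => ltilde pi x yh
  | r'.+1 => ltilde pi x yh +
      \int[K (n - r')%N (x, yh)]_x'
         ereal_inf (range (fun b : Yh => Qaux n r' pi x' b))
  end.

Definition Qstar (n j : nat) := Qaux n (n - j).
Definition Vstar (n j : nat) (pi : measure W R) (x : X) : \bar R :=
  ereal_inf (range (fun b : Yh => Qstar n j pi x b)).

Definition star_policy (post : R.-pker Zm ~> W)
    (psistar : nat -> measure W R -> X -> Yh) (i : nat) : policy :=
  fun k h => psistar (i + k)%N (post (hist_z h)) (hist_x h).

End dynamic_inference.

(* Main.v *)
Require Import Defs.
From HB Require Import structures.
From mathcomp Require Import all_boot all_order all_algebra.
From mathcomp Require Import all_classical all_reals all_analysis.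
From mathcomp Require Import measurable_realfun.
From mathcomp Require Import zify.
Import Order.TTheory GRing.Theory Num.Theory.
Local Open Scope classical_set_scope.
Local Open Scope ereal_scope.

Set Implicit Arguments.
Unset Strict Implicit.
Unset Printing Implicit Defensive.

Section aux.
Local Open Scope ring_scope.
Local Open Scope ereal_scope.
Context {R : realType}.

Lemma le_integral_nm d (T : measurableType d) (mu : {measure set T -> \bar R})
  (f g : T -> \bar R) : (forall x, 0 <= f x) -> (forall x, f x <= g x) ->
  \int[mu]_x f x <= \int[mu]_x g x.
Proof.
move=> f0 fg.
rewrite !ge0_integralTE //; last by move=> x; exact: le_trans (f0 x) (fg x).
apply: le_ereal_sup => _ [h hf <-]; exists h => // x.
exact: le_trans (hf x) (fg x).
Qed.

Section kconst.
Context d d' (T : measurableType d) (B : measurableType d') (P : probability B R).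
Definition kconst (_ : T) : {measure set B -> \bar R} := P.
Let mk U : measurable U -> measurable_fun [set: T] (kconst ^~ U).
Proof. by move=> _; exact: (@measurable_cst _ _ T _ setT (P U)). Qed.
HB.instance Definition _ := isKernel.Build _ _ T B R kconst mk.
Let pk x : kconst x [set: B] = 1. Proof. exact: probability_setT. Qed.
HB.instance Definition _ := Kernel_isProbability.Build _ _ T B R kconst pk.
End kconst.

Section kcompf.
Context d d' d'' (T : measurableType d) (A : measurableType d')
  (B : measurableType d'') (k : R.-pker A ~> B) (g : T -> A).
Definition kcompf (mg : measurable_fun [set: T] g) (t : T) : {measure set B -> \bar R} := k (g t).
Variable mg : measurable_fun [set: T] g.
Let mk U : measurable U -> measurable_fun [set: T] (kcompf mg ^~ U).
Proof. by move=> mU; exact: measurableT_comp (measurable_kernel k U mU) mg. Qed.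
HB.instance Definition _ := isKernel.Build _ _ T B R (kcompf mg) mk.
Let pk x : kcompf mg x [set: B] = 1. Proof. exact: prob_kernel. Qed.
HB.instance Definition _ := Kernel_isProbability.Build _ _ T B R (kcompf mg) pk.
End kcompf.

Lemma measurable_int_kernel d d' d'' (T : measurableType d) (A : measurableType d')
  (B : measurableType d'') (k : R.-pker A ~> B) (g : T -> A)
  (f : T * B -> \bar R) :
  measurable_fun [set: T] g -> measurable_fun [set: T * B] f -> (forall t, 0 <= f t) ->
  measurable_fun [set: T] (fun t => \int[k (g t)]_y f (t, y)).
Proof.
move=> mg mf f0.
exact: (@measurable_kfcomp _ _ T B R (kcompf k mg) f mf f0).
Qed.

Lemma measurable_int_prob d d' (T : measurableType d) (B : measurableType d')
  (P : probability B R) (f : T * B -> \bar R) :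
  measurable_fun [set: T * B] f -> (forall t, 0 <= f t) ->
  measurable_fun [set: T] (fun t => \int[P]_y f (t, y)).
Proof.
move=> mf f0.
exact: (measurable_int_kernel (kconst (T:=T) P) (g := id) (@measurable_id _ _ setT) mf f0).
Qed.

Section mprob.
Context d (T : measurableType d) (m : {measure set T -> \bar R}).
Definition mprob (h : m [set: T] = 1) : set T -> \bar R := m.
Variable h : m [set: T] = 1.
HB.instance Definition _ := Measure.on (mprob h).
HB.instance Definition _ := Measure_isProbability.Build _ _ _ (mprob h) h.
Lemma mprobE : m = mprob h :> {measure set T -> \bar R}.
Proof. by apply: eq_measure. Qed.
End mprob.

Lemma fubini_prob d d' (T1 : measurableType d) (T2 : measurableType d')
  (m1 : {measure set T1 -> \bar R}) (m2 : {measure set T2 -> \bar R})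
  (f : T1 * T2 -> \bar R) : m1 [set: T1] = 1 -> m2 [set: T2] = 1 ->
  measurable_fun [set: T1 * T2] f -> (forall t, 0 <= f t) ->
  \int[m1]_x \int[m2]_y f (x, y) = \int[m2]_y \int[m1]_x f (x, y).
Proof.
move=> h1 h2 mf f0.
rewrite (mprobE h1) (mprobE h2).
exact: (@fubini_tonelli _ _ T1 T2 R (mprob h1) (mprob h2) f mf f0).
Qed.

Section kpush.
Context d d' d'' (T : measurableType d) (S : measurableType d')
  (U : measurableType d'') (k : R.-pker T ~> S) (phi : T -> S -> U).
Hypothesis mphi : measurable_fun [set: (T * S)%type] (fun p => phi p.1 p.2).

Let mphit t : measurable_fun [set: S] (phi t).
Proof.
exact: (measurableT_comp mphi (g := fun s : S => (t, s)) (measurable_fun_pair (measurable_cst t) (@measurable_id _ _ setT))).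
Qed.

Definition kpush (t : T) : {measure set U -> \bar R} :=
  measure_function_pushforward__canonical__measure_function_Measure (k t) (mphit t).

Lemma kpushE t V : kpush t V = k t (phi t @^-1` V).
Proof. by []. Qed.

Let mk V : measurable V -> measurable_fun [set: T] (kpush ^~ V).
Proof.
move=> mV.
have -> : (kpush ^~ V) = (fun t => \int[k t]_s (\1_V (phi t s))%:E).
  apply/funext => t; rewrite kpushE -[RHS]/(\int[k t]_s (\1_(phi t @^-1` V) s)%:E).
  rewrite integral_indic ?setIT //.
  by rewrite -[X in measurable X]setTI; exact: mphit.
apply: (measurable_int_kernel k (g := id) (f := fun p : (T * S)%type => (\1_V (phi p.1 p.2))%:E)).
- exact: measurable_id.
- apply/measurable_EFinP; apply: measurableT_comp; [exact: measurable_indic|exact: mphi].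
- by move=> p; rewrite lee_fin.
Qed.

HB.instance Definition _ := isKernel.Build _ _ T U R kpush mk.
Let pk t : kpush t [set: U] = 1.
Proof. by rewrite kpushE preimage_setT prob_kernel. Qed.
HB.instance Definition _ := Kernel_isProbability.Build _ _ T U R kpush pk.

Lemma integral_kpush t (f : U -> \bar R) : measurable_fun setT f -> (forall u, 0 <= f u) ->
  \int[kpush t]_u f u = \int[k t]_s f (phi t s).
Proof.
move=> mf f0.
rewrite /kpush ge0_integral_pushforward //.
Qed.

End kpush.

End aux.

Section posterior.
Local Open Scope ring_scope.
Local Open Scope ereal_scope.
Context {R : realType} {dW dZ : measure_display}
  (W : measurableType dW) (Zm : measurableType dZ).
Variables (PW : probability W R) (PZW : R.-pker W ~> Zm) (post : R.-pker Zm ~> W).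
Hypothesis hpost : is_posterior PW PZW post.

Let k1 := kconst (T:=unit) PW.
Let k2 := kcompf PZW (@measurable_snd _ _ unit W).
Let mphiA : measurable_fun [set: ((unit * W) * Zm)%type] (fun p => (p.1.2, p.2)).
Proof.
apply: measurable_fun_pair; last exact: measurable_snd.
by apply: measurableT_comp; [exact: measurable_snd|exact: measurable_fst].
Qed.
Let kA := kpush (phi := fun (p : (unit * W)%type) (z : Zm) => (p.2, z)) k2 mphiA.
Let mu1 := k1 \; kA.

Lemma mu1E f : measurable_fun setT f -> (forall p, 0 <= f p) ->
  \int[mu1 tt]_p f p = \int[PW]_w \int[PZW w]_z f (w, z).
Proof.
move=> mf f0.
rewrite /mu1 integral_kcomp //.
apply: eq_integral => w _.
by rewrite integral_kpush.
Qed.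

Let kZ := k1 \; k2.
Let k3 := kcompf post (@measurable_snd _ _ unit Zm).
Let mphiB : measurable_fun [set: ((unit * Zm) * W)%type] (fun p => (p.2, p.1.2)).
Proof.
apply: measurable_fun_pair; first exact: measurable_snd.
by apply: measurableT_comp; [exact: measurable_snd|exact: measurable_fst].
Qed.
Let kB := kpush (phi := fun (p : (unit * Zm)%type) (w : W) => (w, p.2)) k3 mphiB.
Let mu2 := kZ \; kB.

Lemma mu2E f : measurable_fun setT f -> (forall p, 0 <= f p) ->
  \int[mu2 tt]_p f p = \int[PW]_w \int[PZW w]_z \int[post z]_w' f (w', z).
Proof.
move=> mf f0.
rewrite /mu2 integral_kcomp //.
under eq_integral do rewrite integral_kpush //.
rewrite /kZ integral_kcomp //.
- by move=> z; apply: integral_ge0 => w' _; exact: f0.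
- rewrite /k3 /kcompf /=.
  apply: (measurable_int_kernel post (g := id) (f := fun q : (Zm * W)%type => f (q.2, q.1))).
  + exact: measurable_id.
  + apply: measurableT_comp => //; apply: measurable_fun_pair; [exact: measurable_snd|exact: measurable_fst].
  + by move=> q; exact: f0.
Qed.

Lemma indicX2 (A : set W) (B : set Zm) w z :
  (\1_(A `*` B) (w, z) : R)%:E = (\1_A w : R)%:E * (\1_B z : R)%:E.
Proof. by rewrite !indicE classical_sets.in_setX /=; case: (w \in A); case: (z \in B); rewrite /= ?mul1e ?mul0e ?mule0. Qed.

Let mindX (A : set W) (B : set Zm) : measurable A -> measurable B ->
  measurable_fun setT (fun p : (W * Zm)%type => (\1_(A `*` B) p : R)%:E).
Proof.
move=> mA mB; apply/measurable_EFinP; apply: measurable_indic.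
exact: measurableX.
Qed.

Let mu1X (A : set W) (B : set Zm) : measurable A -> measurable B ->
  mu1 tt (A `*` B) = \int[PW]_(w in A) PZW w B.
Proof.
move=> mA mB.
have mAB : measurable (A `*` B) by exact: measurableX.
rewrite -(setIT (A `*` B)) -integral_indic //.
rewrite mu1E //; last exact: (mindX mA mB).
rewrite [RHS]integral_mkcond; apply: eq_integral => w _.
rewrite patchE; case: ifPn => wA.
  have -> : PZW w B = \int[PZW w]_z (\1_B z : R)%:E by rewrite integral_indic // setIT.
  by apply: eq_integral => z _; rewrite indicX2 [\1_A w]indicE wA mul1e.
apply: integral0_eq => z _.
by rewrite indicX2 [\1_A w]indicE (negbTE wA) mul0e.
Qed.

Let mu2X (A : set W) (B : set Zm) : measurable A -> measurable B ->
  mu2 tt (A `*` B) = \int[PW]_w \int[PZW w]_(z in B) post z A.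
Proof.
move=> mA mB.
have mAB : measurable (A `*` B) by exact: measurableX.
rewrite -(setIT (A `*` B)) -integral_indic //.
rewrite mu2E //; last exact: (mindX mA mB).
apply: eq_integral => w _.
rewrite [RHS]integral_mkcond; apply: eq_integral => z _.
rewrite patchE; case: ifPn => zB.
  have -> : post z A = \int[post z]_w' (\1_A w' : R)%:E by rewrite integral_indic // setIT.
  by apply: eq_integral => w' _; rewrite indicX2 [\1_B z]indicE zB mule1.
apply: integral0_eq => w' _.
by rewrite indicX2 [\1_B z]indicE (negbTE zB) mule0.
Qed.

Let setI_closedX : @setI_closed (W * Zm)%type
  [set A `*` B | A in measurable & B in measurable].
Proof.
move=> X Y [X1 mX1 [X2 mX2 <-{X}]] [Y1 mY1 [Y2 mY2 <-{Y}]].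
exists (X1 `&` Y1); first exact: measurableI.
by exists (X2 `&` Y2); [exact: measurableI|rewrite setXI].
Qed.

Lemma mu12 E : measurable E -> mu1 tt E = mu2 tt E.
Proof.
apply: (measure_unique [set A `*` B | A in measurable & B in measurable] (fun _ => setT)).
- exact: measurable_prod_measurableType.
- exact: setI_closedX.
- by move=> _; exists setT => //; exists setT => //; rewrite setXTT.
- by apply/seteqP; split => // x _; exists 0%N.
- move=> _ [A mA [B mB <-]].
  by rewrite mu1X // mu2X // hpost.
- move=> _.
  have -> : mu1 tt setT = \int[k1 tt]_w kA (tt, w) setT by [].
  rewrite (eq_integral (cst 1)); last by move=> w _; exact: prob_kernel.
  by rewrite integral_cst // prob_kernel mul1e ltry.
Qed.

Lemma posterior_swap (g : W * Zm -> \bar R) : measurable_fun setT g -> (forall p, 0 <= g p) ->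
  \int[PW]_w \int[PZW w]_z g (w, z) = \int[PW]_w \int[PZW w]_z \int[post z]_w' g (w', z).
Proof.
move=> mg g0.
rewrite -mu1E // -mu2E //.
apply: eq_measure_integral => A mA _.
by rewrite mu12.
Qed.

End posterior.

Section main.
Local Open Scope ring_scope.
Local Open Scope ereal_scope.
Context {R : realType} {dX dY dYh dW dZ : measure_display}
  (X : measurableType dX) (Y : measurableType dY) (Yh : measurableType dYh)
  (W : measurableType dW) (Zm : measurableType dZ).
Variables (K : nat -> R.-pker (X * Yh)%type ~> X)
          (PY : R.-pker (X * W)%type ~> Y)
          (ell : X -> Y -> Yh -> R).
Hypothesis mell : measurable_fun [set: (X * Y * Yh)%type] (fun t => ell t.1.1 t.1.2 t.2).
Hypothesis ell0 : forall x y yh, (0 <= ell x y yh)%R.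
Variable i : nat.

Lemma mhist_x k : measurable_fun setT (@hist_x _ _ _ X Yh Zm k).
Proof. by case: k => [|k]; exact: measurable_snd. Qed.

Lemma mhist_z k : measurable_fun setT (@hist_z _ _ _ X Yh Zm k).
Proof.
elim: k => [|k IH]; first exact: measurable_fst.
exact: (measurableT_comp IH (measurableT_comp measurable_fst measurable_fst)).
Qed.

Lemma mell_comp d (T : measurableType d) (a : T -> X) (b : T -> Y) (c : T -> Yh) :
  measurable_fun setT a -> measurable_fun setT b -> measurable_fun setT c ->
  measurable_fun setT (fun t => (ell (a t) (b t) (c t))%:E).
Proof.
move=> ma mb mc; apply/measurable_EFinP.
apply: (measurableT_comp mell (g := fun t => ((a t, b t), c t))).
by apply: measurable_fun_pair => //; exact: measurable_fun_pair.
Qed.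

Lemma cost_ge0 psi r k w h : 0 <= @cost_to_go R _ _ _ _ _ X Y Yh W Zm K PY ell i psi r k w h.
Proof.
elim: r k w h => [|r IH] k w h /=.
  by apply: integral_ge0 => y _; rewrite lee_fin.
apply: integral_ge0 => y _; apply: adde_ge0; first by rewrite lee_fin.
by apply: integral_ge0 => x' _; exact: IH.
Qed.

Lemma mcost psi r k : (forall j, (k <= j <= k + r)%N -> measurable_fun setT (psi j)) ->
  measurable_fun [set: (W * projT2 (Hist X Yh Zm k))%type]
    (fun p => @cost_to_go R _ _ _ _ _ X Y Yh W Zm K PY ell i psi r k p.1 p.2).
Proof.
elim: r k => [|r IH] k mpsi /=.
  have mk : measurable_fun setT (psi k) by apply: mpsi; rewrite addn0 leqnn.
  apply: (measurable_int_kernel PY (g := fun p : (W * projT2 (Hist X Yh Zm k))%type => (hist_x p.2, p.1))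
     (f := fun q => (ell (hist_x q.1.2) q.2 (psi k q.1.2))%:E)).
  - apply: measurable_fun_pair; last exact: measurable_fst.
    by apply: measurableT_comp; [exact: mhist_x|exact: measurable_snd].
  - apply: mell_comp.
    + by apply: measurableT_comp; [exact: mhist_x|apply: measurableT_comp; [exact: measurable_snd|exact: measurable_fst]].
    + exact: measurable_snd.
    + by apply: measurableT_comp; [exact: mk|apply: measurableT_comp; [exact: measurable_snd|exact: measurable_fst]].
  - by move=> t; rewrite lee_fin.
have mk : measurable_fun setT (psi k) by apply: mpsi; rewrite leqnn /= leq_addr.
have mpsi' : forall j, (k.+1 <= j <= k.+1 + r)%N -> measurable_fun setT (psi j).
  move=> j /andP[h1 h2]; apply: mpsi; apply/andP; split; first exact: ltnW.
  by rewrite addnS -addSn.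
have IH' := IH k.+1 mpsi'.
pose G (p : (W * projT2 (Hist X Yh Zm k))%type) :=
  \int[K (i + k).+1 (hist_x p.2, psi k p.2)]_x'
     @cost_to_go R _ _ _ _ _ X Y Yh W Zm K PY ell i psi r k.+1 p.1 (((p.2, psi k p.2), x') : projT2 (Hist X Yh Zm k.+1)).
have mG : measurable_fun setT G.
  apply: (measurable_int_kernel (K (i + k).+1)
     (g := fun p : (W * projT2 (Hist X Yh Zm k))%type => (hist_x p.2, psi k p.2))
     (f := fun q => @cost_to_go R _ _ _ _ _ X Y Yh W Zm K PY ell i psi r k.+1 q.1.1 (((q.1.2, psi k q.1.2), q.2) : projT2 (Hist X Yh Zm k.+1)))).
  - apply: measurable_fun_pair.
      by apply: measurableT_comp; [exact: mhist_x|exact: measurable_snd].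
    by apply: measurableT_comp; [exact: mk|exact: measurable_snd].
  - apply: (measurableT_comp IH' (g := fun q : (W * projT2 (Hist X Yh Zm k) * X)%type => (q.1.1, (((q.1.2, psi k q.1.2), q.2) : projT2 (Hist X Yh Zm k.+1))))).
    apply: measurable_fun_pair.
      by apply: measurableT_comp; [exact: measurable_fst|exact: measurable_fst].
    apply: measurable_fun_pair; last exact: measurable_snd.
    apply: measurable_fun_pair.
      by apply: measurableT_comp; [exact: measurable_snd|exact: measurable_fst].
    by apply: measurableT_comp; [exact: mk|apply: measurableT_comp; [exact: measurable_snd|exact: measurable_fst]].
  - by move=> t; exact: cost_ge0.
apply: (measurable_int_kernel PY (g := fun p : (W * projT2 (Hist X Yh Zm k))%type => (hist_x p.2, p.1))
   (f := fun q => (ell (hist_x q.1.2) q.2 (psi k q.1.2))%:E + G q.1)).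
- apply: measurable_fun_pair; last exact: measurable_fst.
  by apply: measurableT_comp; [exact: mhist_x|exact: measurable_snd].
- apply: emeasurable_funD.
    apply: mell_comp.
    + by apply: measurableT_comp; [exact: mhist_x|apply: measurableT_comp; [exact: measurable_snd|exact: measurable_fst]].
    + exact: measurable_snd.
    + by apply: measurableT_comp; [exact: mk|apply: measurableT_comp; [exact: measurable_snd|exact: measurable_fst]].
  by apply: measurableT_comp; [exact: mG|exact: measurable_fst].
- move=> t; apply: adde_ge0; first by rewrite lee_fin.
  by apply: integral_ge0 => x' _; exact: cost_ge0.
Qed.

Lemma cost_decomp psi r k (pi : {measure set W -> \bar R}) (h : projT2 (Hist X Yh Zm k)) :
  pi [set: W] = 1 ->
  (forall j, (k.+1 <= j <= k.+1 + r)%N -> measurable_fun setT (psi j)) ->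
  \int[pi]_w @cost_to_go R _ _ _ _ _ X Y Yh W Zm K PY ell i psi r.+1 k w h =
  ltilde PY ell pi (hist_x h) (psi k h) +
  \int[K (i + k).+1 (hist_x h, psi k h)]_x' \int[pi]_w
     @cost_to_go R _ _ _ _ _ X Y Yh W Zm K PY ell i psi r k.+1 w
        (((h, psi k h), x') : projT2 (Hist X Yh Zm k.+1)).
Proof.
move=> pi1 mpsi.
set x := hist_x h; set yh := psi k h.
pose c2 (q : (W * X)%type) := @cost_to_go R _ _ _ _ _ X Y Yh W Zm K PY ell i psi r k.+1 q.1
        (((h, yh), q.2) : projT2 (Hist X Yh Zm k.+1)).
have mc2 : measurable_fun setT c2.
  apply: (measurableT_comp (mcost mpsi) (g := fun q : (W * X)%type => (q.1, (((h, yh), q.2) : projT2 (Hist X Yh Zm k.+1))))).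
  apply: measurable_fun_pair; first exact: measurable_fst.
  apply: measurable_fun_pair; last exact: measurable_snd.
  exact: measurable_cst.
have c20 q : 0 <= c2 q by exact: cost_ge0.
pose G w := \int[K (i + k).+1 (x, yh)]_x' c2 (w, x').
have mG : measurable_fun setT G.
  exact: (measurable_int_kernel (K (i + k).+1) (g := fun _ : W => (x, yh)) (f := c2) (measurable_cst _) mc2 c20).
have G0 w : 0 <= G w by apply: integral_ge0 => x' _; exact: c20.
pose A w := \int[PY (x, w)]_y (ell x y yh)%:E.
have mA : measurable_fun setT A.
  apply: (measurable_int_kernel PY (g := fun w : W => (x, w)) (f := fun q : (W * Y)%type => (ell x q.2 yh)%:E)).
  - by apply: measurable_fun_pair; [exact: measurable_cst|].
  - by apply: mell_comp; [exact: measurable_cst|exact: measurable_snd|exact: measurable_cst].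
  - by move=> t; rewrite lee_fin.
have A0 w : 0 <= A w by apply: integral_ge0 => y _; rewrite lee_fin.
transitivity (\int[pi]_w (A w + G w)).
  apply: eq_integral => w _ /=.
  rewrite ge0_integralD //.
  - rewrite integral_cst // prob_kernel mule1 //.
  - by move=> y _; rewrite lee_fin.
  - by apply: mell_comp; [exact: measurable_cst|by []|exact: measurable_cst].
  - by move=> y _; exact: G0.
rewrite ge0_integralD //.
congr (_ + _).
have := fubini_prob pi1 (@prob_kernel _ _ _ _ _ (K (i + k).+1) (x, yh)) mc2 c20. rewrite /G. move=> ->. by [].
Qed.

Variable n : nat.

Lemma Qaux_ge0 r (pi : {measure set W -> \bar R}) x yh : 0 <= Qaux K PY ell n r pi x yh.
Proof.
elim: r x yh => [|r IH] x yh /=.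
  by apply: integral_ge0 => w _; apply: integral_ge0 => y _; rewrite lee_fin.
apply: adde_ge0.
  by apply: integral_ge0 => w _; apply: integral_ge0 => y _; rewrite lee_fin.
apply: integral_ge0 => x' _; apply: le_ereal_inf_tmp => _ [b _ <-]; exact: IH.
Qed.

Lemma cost_lb psi r k (pi : {measure set W -> \bar R}) (h : projT2 (Hist X Yh Zm k)) :
  pi [set: W] = 1 -> (i + k + r = n)%N ->
  (forall j, (k <= j <= k + r)%N -> measurable_fun setT (psi j)) ->
  Qaux K PY ell n r pi (hist_x h) (psi k h) <=
  \int[pi]_w @cost_to_go R _ _ _ _ _ X Y Yh W Zm K PY ell i psi r k w h.
Proof.
elim: r k h => [|r IH] k h pi1 hn mpsi; first by [].
have mpsi' : forall j, (k.+1 <= j <= k.+1 + r)%N -> measurable_fun setT (psi j).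
  move=> j /andP[h1 h2]; apply: mpsi; apply/andP; split; first exact: ltnW.
  by rewrite addnS -addSn.
rewrite cost_decomp // /=.
have -> : (n - r = (i + k).+1)%N by rewrite -hn; lia.
apply: leeD2l.
apply: le_integral_nm.
  by move=> x'; apply: le_ereal_inf_tmp => _ [b _ <-]; exact: Qaux_ge0.
move=> x'.
apply: le_trans; last first.
  apply: (IH k.+1 (((h, psi k h), x') : projT2 (Hist X Yh Zm k.+1))) => //.
  lia.
by apply: ereal_inf_lbound; exists (psi k.+1 (((h, psi k h), x') : projT2 (Hist X Yh Zm k.+1))).
Qed.

Lemma inf_attained (Q : Yh -> \bar R) a : (forall b, Q a <= Q b) -> ereal_inf (range Q) = Q a.
Proof.
move=> Qa; apply/le_anti/andP; split.
  by apply: ereal_inf_lbound; exists a.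
by apply: le_ereal_inf_tmp => _ [b _ <-]; exact: Qa.
Qed.

Variables (post : R.-pker Zm ~> W) (psistar : nat -> {measure set W -> \bar R} -> X -> Yh).
Hypothesis opt : forall j, (i <= j <= n)%N ->
     forall pi : {measure set W -> \bar R}, pi [set: W] = 1 ->
     forall (x : X) (yh : Yh),
       Qstar K PY ell n j pi x (psistar j pi x) <= Qstar K PY ell n j pi x yh.

Lemma cost_star r k (h : projT2 (Hist X Yh Zm k)) :
  (i + k + r = n)%N ->
  (forall j, (k <= j <= k + r)%N -> measurable_fun setT (star_policy post psistar i (k:=j))) ->
  \int[post (hist_z h)]_w @cost_to_go R _ _ _ _ _ X Y Yh W Zm K PY ell i (star_policy post psistar i) r k w h =
  Vstar K PY ell n (i + k) (post (hist_z h)) (hist_x h).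
Proof.
have p1 z : post z [set: W] = 1 by exact: prob_kernel.
elim: r k h => [|r IH] k h hn mpsi.
  rewrite /Vstar (@inf_attained _ (psistar (i + k) (post (hist_z h)) (hist_x h))); last first.
    move=> b; apply: opt => //; apply/andP; split; [exact: leq_addr|by rewrite -hn addn0].
  by rewrite /Qstar -hn addn0 subnn.
have mpsi' : forall j, (k.+1 <= j <= k.+1 + r)%N -> measurable_fun setT (star_policy post psistar i (k:=j)).
  move=> j /andP[h1 h2]; apply: mpsi; apply/andP; split; first exact: ltnW.
  by rewrite addnS -addSn.
rewrite cost_decomp //.
rewrite /Vstar (@inf_attained _ (psistar (i + k) (post (hist_z h)) (hist_x h))); last first.
  move=> b; apply: opt => //; apply/andP; split; [exact: leq_addr|by rewrite -hn; lia].
rewrite /Qstar.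
have -> : (n - (i + k) = r.+1)%N by rewrite -hn; lia.
rewrite /=.
have -> : (n - r = (i + k).+1)%N by rewrite -hn; lia.
congr (_ + _).
apply: eq_integral => x' _.
rewrite (IH k.+1 (((h, star_policy post psistar i h), x') : projT2 (Hist X Yh Zm k.+1))) //; last first.
  lia.
rewrite /Vstar /Qstar /=.
by have -> : (n - (i + k.+1) = r)%N by rewrite -hn; lia.
Qed.

End main.

Unset Implicit Arguments.

Theorem corollary1 (R : realType) (dX dY dYh dW dZ : measure_display)
    (X : measurableType dX) (Y : measurableType dY) (Yh : measurableType dYh)
    (W : measurableType dW) (Zm : measurableType dZ)
    (K : nat -> R.-pker (X * Yh)%type ~> X)
    (PY : R.-pker (X * W)%type ~> Y)
    (PW : probability W R) (PZW : R.-pker W ~> Zm)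
    (post : R.-pker Zm ~> W)
    (ell : X -> Y -> Yh -> R)
    (psistar : nat -> measure W R -> X -> Yh)
    (n i : nat) (PXi : probability X R) :
  (1 <= i <= n)%N ->
  is_posterior PW PZW post ->
  measurable_fun [set: (X * Y * Yh)%type] (fun t => ell t.1.1 t.1.2 t.2) ->
  (forall x y yh, (0 <= ell x y yh)%R) ->
  (forall j, (i <= j <= n)%N ->
     forall pi : measure W R, pi [set: W] = 1 ->
     forall (x : X) (yh : Yh),
       Qstar K PY ell n j pi x (psistar j pi x) <= Qstar K PY ell n j pi x yh) ->
  (forall j, (i <= j <= n)%N ->
     measurable_fun [set: (Zm * X)%type]
       (fun zx : Zm * X => psistar j (post zx.1) zx.2)) ->
  let EV := \int[PW]_w \int[PZW w]_z \int[PXi]_x Vstar K PY ell n i (post z) x in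
  [/\ admissible (n - i) (star_policy post psistar i),
      expected_loss K PY ell PW PZW PXi i n (star_policy post psistar i) = EV &
      forall psi : policy X Yh Zm, admissible (n - i) psi ->
        EV <= expected_loss K PY ell PW PZW PXi i n psi].
Proof.
move=> /andP[i1 iN] hpost mell ell0 opt mstar EV.
have hN : (i + 0 + (n - i))%N = n by lia.
have p1 z : post z [set: W] = 1 by exact: prob_kernel.
have adm : admissible (n - i) (star_policy post psistar i).
  move=> k hk.
  have := mstar (i + k)%N ltac:(apply/andP; split; lia).
  move=> ms.
  rewrite /star_policy.
  apply: (measurableT_comp ms (g := fun h : projT2 (Hist X Yh Zm k) => (hist_z h, hist_x h))).
  apply: measurable_fun_pair; [exact: mhist_z|exact: mhist_x].
have EL : forall psi : policy X Yh Zm, admissible (n - i) psi ->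
  expected_loss K PY ell PW PZW PXi i n psi =
  \int[PW]_w \int[PZW w]_z \int[PXi]_x \int[post z]_w'
     @cost_to_go R _ _ _ _ _ X Y Yh W Zm K PY ell i psi (n - i) 0 w' ((z, x) : projT2 (Hist X Yh Zm 0)).
  move=> psi hpsi.
  have mc : measurable_fun setT (fun p : (W * projT2 (Hist X Yh Zm 0))%type =>
      @cost_to_go R _ _ _ _ _ X Y Yh W Zm K PY ell i psi (n - i) 0 p.1 p.2).
    by apply: (mcost K PY mell ell0) => j hj; apply: hpsi; lia.
  rewrite /expected_loss.
  rewrite (posterior_swap hpost (g := fun p : (W * Zm)%type => \int[PXi]_x
     @cost_to_go R _ _ _ _ _ X Y Yh W Zm K PY ell i psi (n - i) 0 p.1 ((p.2, x) : projT2 (Hist X Yh Zm 0)))).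
  - apply: eq_integral => w _; apply: eq_integral => z _.
    have mcq : measurable_fun setT (fun q : (W * X)%type =>
        @cost_to_go R _ _ _ _ _ X Y Yh W Zm K PY ell i psi (n - i) 0 q.1 ((z, q.2) : projT2 (Hist X Yh Zm 0))).
      apply: (measurableT_comp mc (g := fun q : (W * X)%type => (q.1, ((z, q.2) : projT2 (Hist X Yh Zm 0))))).
      apply: measurable_fun_pair; first exact: measurable_fst.
      apply: measurable_fun_pair; [exact: measurable_cst|exact: measurable_snd].
    have c0 : forall t : (W * X)%type, 0 <= @cost_to_go R _ _ _ _ _ X Y Yh W Zm K PY ell i psi (n - i) 0 t.1 ((z, t.2) : projT2 (Hist X Yh Zm 0)) by move=> t; exact: cost_ge0.
    have E := fubini_prob (p1 z) (probability_setT PXi) mcq c0.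
    rewrite -[in RHS]E.
    reflexivity.
  - pose c3 := fun q : ((W * Zm) * X)%type => @cost_to_go R _ _ _ _ _ X Y Yh W Zm K PY ell i psi (n - i) 0 q.1.1 ((q.1.2, q.2) : projT2 (Hist X Yh Zm 0)).
    have mc3 : measurable_fun setT c3.
      apply: (measurableT_comp mc (g := fun q : ((W * Zm) * X)%type => (q.1.1, ((q.1.2, q.2) : projT2 (Hist X Yh Zm 0))))).
      apply: measurable_fun_pair.
        by apply: measurableT_comp; [exact: measurable_fst|exact: measurable_fst].
      apply: measurable_fun_pair; last exact: measurable_snd.
      by apply: measurableT_comp; [exact: measurable_snd|exact: measurable_fst].
    have c30 : forall t, 0 <= c3 t by move=> t; exact: cost_ge0.
    have mg := measurable_int_prob PXi mc3 c30.
    exact mg.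
  - by move=> p; apply: integral_ge0 => x _; exact: cost_ge0.
split.
- exact: adm.
- rewrite (EL _ adm).
  apply: eq_integral => w _; apply: eq_integral => z _; apply: eq_integral => x _.
  have mst : forall j, (0 <= j <= 0 + (n - i))%N -> measurable_fun setT (star_policy post psistar i (k:=j)).
    by move=> j hj; apply: adm; lia.
  have E := cost_star mell ell0 opt ((z, x) : projT2 (Hist X Yh Zm 0)) hN mst.
  rewrite addn0 in E.
  exact E.
- move=> psi hpsi.
  rewrite (EL _ hpsi).
  have V0 pi x : 0 <= Vstar K PY ell n i pi x.
    by apply: le_ereal_inf_tmp => _ [b _ <-]; exact: Qaux_ge0.
  apply: le_integral_nm.
    by move=> w; apply: integral_ge0 => z _; apply: integral_ge0 => x _; exact: V0.
  move=> w; apply: le_integral_nm.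
    by move=> z; apply: integral_ge0 => x _; exact: V0.
  move=> z; apply: le_integral_nm; first by move=> x; exact: V0.
  move=> x.
  have mps : forall j, (0 <= j <= 0 + (n - i))%N -> measurable_fun setT (psi j).
    by move=> j hj; apply: hpsi; lia.
  have E := cost_lb K PY mell ell0 (i := i) (n := n) (psi := psi) (r := n - i) (k := 0) (pi := post z) ((z, x) : projT2 (Hist X Yh Zm 0)) (p1 z) hN mps.
  apply: le_trans E.
  rewrite /Vstar /Qstar.
  exact: (ereal_inf_lbound (ex_intro2 _ _ (psi 0%N ((z, x) : projT2 (Hist X Yh Zm 0))) I erefl)).
Qed.
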